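(* Let $n$ be a positive integer. (1) The graph obtained from two disjoint triangles $K_3$ by adding a perfect matching between them (the $i$-th vertex of one triangle joined to the $i$-th vertex of the other) is not a vertex-minor of $C_n$. (2) $C_7$ is not a vertex-minor of the graph obtained from two disjoint copies of $K_n$ by adding a perfect matching between them (the $i$-th vertex of one copy joined to the $i$-th vertex of the other).
   Context: All graphs are simple. A graph $H$ is a vertex-minor of $G$ if $H$ is an induced subgraph of a graph obtained from $G$ by a sequence of local complementations (local complementation at $v$ replaces the subgraph induced on the neighborhood of $v$ by its complement). $C_n$ is the cycle on $n$ vertices. *)

(* Defs.v *)
(* Simple graphs are symmetric irreflexive relations on a finType. *)
From mathcomp Require Import all_boot.
Unset Printing Implicit Defensive.

Definition local_comp (T : finType) (e : rel T) (v : T) : rel T :=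
  fun x y => if [&& e v x, e v y & x != y] then ~~ e x y else e x y.

Definition local_comps (T : finType) (e : rel T) (s : seq T) : rel T :=
  foldl (@local_comp T) e s.

Definition vertex_minor (U T : finType) (h : rel U) (g : rel T) : Prop :=
  exists (s : seq T) (f : U -> T),
    injective f /\ forall x y : U, h x y = @local_comps T g s (f x) (f y).

Definition cycle_graph (n : nat) : rel 'I_n :=
  fun i j => (i != j) &&
    ((val j == (val i).+1 %% n) || (val i == (val j).+1 %% n)).

Definition matched_cliques (n : nat) : rel (bool * 'I_n) :=
  fun x y => ((x.1 == y.1) && (x.2 != y.2)) || ((x.1 != y.1) && (x.2 == y.2)).

Definition prism : rel (bool * 'I_3) := matched_cliques 3.

(* Main.v *)
Require Import Defs.
From mathcomp Require Import all_boot all_algebra zify.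
From Stdlib Require Import FunctionalExtensionality.
Set Implicit Arguments. Unset Strict Implicit.
Import GRing.Theory.
Local Open Scope ring_scope.

Definition b2F (b : bool) : 'F_2 := (b : nat)%:R.

Lemma b2F_add a b : b2F a + b2F b = b2F (a (+) b).
Proof. by case: a; case: b; apply/eqP. Qed.
Lemma b2F_mul a b : b2F a * b2F b = b2F (a && b).
Proof. by case: a; case: b; apply/eqP. Qed.
Lemma b2F0 : b2F false = 0. Proof. by []. Qed.

Definition det3b (b : nat -> nat -> bool) : bool :=
  [&& b 0 0 , b 1 1 & b 2 2] (+) [&& b 0 0 , b 1 2 & b 2 1]
  (+) [&& b 0 1 , b 1 0 & b 2 2] (+) [&& b 0 1 , b 1 2 & b 2 0]
  (+) [&& b 0 2 , b 1 0 & b 2 1] (+) [&& b 0 2 , b 1 1 & b 2 0].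
Lemma det2E (R : comNzRingType) (A : 'M[R]_2) : \det A = A 0 0 * A 1 1 - A 0 1 * A 1 0.
Proof.
rewrite (expand_det_row _ 0) big_ord_recl big_ord_recl big_ord0 /cofactor !det_mx11 !mxE /=.
have e1 : lift 0 (0 : 'I_1) = 1 :> 'I_2 by apply: val_inj.
have e2 : lift ord0 (0 : 'I_1) = 1 :> 'I_2 by apply: val_inj.
have e3 : lift (lift ord0 ord0) (0 : 'I_1) = 0 :> 'I_2 by apply: val_inj.
have e4 : lift ord0 ord0 = 1 :> 'I_2 by apply: val_inj.
rewrite ?e1 ?e2 ?e3 ?e4 /bump /= addr0 expr0 expr1 !mul1r mulN1r mulrN.
have e5 : lift (1 : 'I_2) (0 : 'I_1) = 0 :> 'I_2 by apply: val_inj.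
have e6 : ord0 = 0 :> 'I_2 by apply: val_inj.
by rewrite ?e5 ?e6.

Qed.

Lemma det3_b2F (b : nat -> nat -> bool) :
  \det (\matrix_(k, l) b2F (b k l) : 'M['F_2]_3) = b2F (det3b b).
Proof.
have m1 : (-1 : 'F_2) = 1 by apply/eqP.
rewrite (expand_det_row _ 0) !big_ord_recl big_ord0 /cofactor.
rewrite !det2E !mxE.
rewrite m1 !expr1n !mul1r !addr0 /=.
have Ny : forall y : 'F_2, - y = y.
  by case=> [[|[|k]] Hk]; apply/eqP => //=; rewrite ltnS ltnS ltn0 in Hk.
rewrite /bump /= !Ny !b2F_mul !b2F_add /det3b.
rewrite !(b2F_mul, b2F_add) !(addn0, add0n) (_ : (1 %% 2 = 1)%N) // (_ : (1 + 1 = 2)%N) //; congr (b2F _).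
by case: (b 0 0); case: (b 0 1); case: (b 0 2); case: (b 1 0); case: (b 1 1);
  case: (b 1 2); case: (b 2 0); case: (b 2 1); case: (b 2 2).
Qed.

Section Cut.
Variable T : finType.
Definition cutb (e : rel T) (X : {set T}) x y := [&& x \in X, y \notin X & e x y].
Definition cutmx e X : 'M['F_2]_#|T| :=
  \matrix_(i, j) b2F (cutb e X (enum_val i) (enum_val j)).

Lemma lc_sym e v : symmetric e -> symmetric (@local_comp T e v).
Proof. by move=> se x y; rewrite /local_comp (se x y) (eq_sym x y); case: (e v x); case: (e v y). Qed.
Lemma lc_irr e v : irreflexive e -> irreflexive (@local_comp T e v).
Proof. by move=> ie x; rewrite /local_comp eqxx !andbF ie. Qed.

Lemma rank_lc e v X : symmetric e -> irreflexive e ->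
  (\rank (cutmx (@local_comp T e v) X) <= \rank (cutmx e X))%N.
Proof.
move=> se ie; case: (boolP (v \in X)) => vX.
- pose N : 'M['F_2]_#|T| := \matrix_(i, k)
     b2F ((enum_val i \in X) && e v (enum_val i) && (k == enum_rank v)).
  have -> : cutmx (@local_comp T e v) X = (1%:M + N) *m cutmx e X.
    apply/matrixP => i j; rewrite mulmxDl mul1mx mxE [in RHS]mxE [(N *m _) i j]mxE.
    rewrite (bigD1 (enum_rank v)) //= big1 ?addr0; last first.
      by move=> k /negbTE nk; rewrite !mxE nk andbF b2F0 mul0r.
    rewrite !mxE enum_rankK eqxx andbT b2F_mul b2F_add; congr b2F.
    rewrite /cutb /local_comp vX /=.
    set xi := enum_val i; set xj := enum_val j.
    case xiX: (xi \in X); case xjX: (xj \in X) => //=; rewrite ?andbF //.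
    have nij : xi != xj by apply/eqP => E; rewrite E xjX in xiX.
    by rewrite nij; case: (e v xi); case: (e v xj); case: (e xi xj).
  exact: mxrankM_maxr.
- pose N : 'M['F_2]_#|T| := \matrix_(k, j)
     b2F ((k == enum_rank v) && (enum_val j \notin X) && e v (enum_val j)).
  have -> : cutmx (@local_comp T e v) X = cutmx e X *m (1%:M + N).
    apply/matrixP => i j; rewrite mulmxDr mulmx1 mxE [in RHS]mxE [(_ *m N) i j]mxE.
    rewrite (bigD1 (enum_rank v)) //= big1 ?addr0; last first.
      by move=> k /negbTE nk; rewrite !mxE nk /= b2F0 mulr0.
    rewrite !mxE enum_rankK eqxx /= b2F_mul b2F_add; congr b2F.
    rewrite /cutb /local_comp vX /= (se _ v).
    set xi := enum_val i; set xj := enum_val j.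
    case xiX: (xi \in X); case xjX: (xj \in X) => //=; rewrite ?andbF //.
    have nij : xi != xj by apply/eqP => E; rewrite E xjX in xiX.
    by rewrite nij; case: (e v xi); case: (e v xj); case: (e xi xj).
  exact: mxrankM_maxl.
Qed.

Lemma rank_lcs e s X : symmetric e -> irreflexive e ->
  (\rank (cutmx (@local_comps T e s) X) <= \rank (cutmx e X))%N.
Proof.
elim: s e => [|v s IH] e se ie //=.
apply: leq_trans (IH _ (lc_sym v se) (lc_irr v ie)) (rank_lc _ _ se ie).
Qed.

Lemma rank_mxsub m n m' n' (f : 'I_m' -> 'I_m) (g : 'I_n' -> 'I_n) (M : 'M['F_2]_(m, n)) :
  (\rank (mxsub f g M) <= \rank M)%N.
Proof.
have -> : mxsub f g M = (rowsub g (rowsub f M)^T)^T by apply/matrixP => i j; rewrite !mxE.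
rewrite mxrank_tr rowsubE; apply: leq_trans (mxrankM_maxr _ _) _.
by rewrite mxrank_tr rowsubE; apply: mxrankM_maxr.
Qed.

Lemma rank2_rows m n (M : 'M['F_2]_(m, n)) i0 i1 :
  (forall i, [\/ row i M = 0, row i M = row i0 M | row i M = row i1 M]) ->
  (\rank M <= 2)%N.
Proof.
move=> H.
have sub : (M <= row i0 M + row i1 M)%MS.
  apply/row_subP => i; case: (H i) => ->.
  - exact: sub0mx.
  - exact: addsmxSl.
  - exact: addsmxSr.
apply: leq_trans (mxrankS sub) _.
apply: leq_trans (mxrank_adds_leqif _ _) _.
by rewrite -[2%N]/(1 + 1)%N leq_add // rank_leq_row.
Qed.

Lemma cut_rank2 e X x0 x1 :
  (forall x, [\/ forall y, cutb e X x y = false,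
                 forall y, cutb e X x y = cutb e X x0 y |
                 forall y, cutb e X x y = cutb e X x1 y]) ->
  (\rank (cutmx e X) <= 2)%N.
Proof.
move=> H; apply: (@rank2_rows _ _ _ (enum_rank x0) (enum_rank x1)) => i.
case: (H (enum_val i)) => Hy; [apply: Or31 | apply: Or32 | apply: Or33];
  apply/rowP => j; rewrite !mxE ?enum_rankK Hy //.
Qed.
End Cut.

Definition vU : seq (bool * 'I_3) := [:: (false, @Ordinal 3 0 isT); (false, @Ordinal 3 1 isT); (false, @Ordinal 3 2 isT); (true, @Ordinal 3 0 isT); (true, @Ordinal 3 1 isT); (true, @Ordinal 3 2 isT)].

Lemma mem_vU (x : bool * 'I_3) : x \in vU.
Proof. by case: x => [[] [[|[|[|k]]] Hk]]. Qed.

Definition gif (g : bool) (x : unit -> bool) : bool := if g then x tt else true.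
Lemma gifP g x : gif g x -> g -> x tt.
Proof. by rewrite /gif => H Hg; rewrite Hg in H. Qed.

Definition check1 : bool :=
  all (fun a => gif (a \notin [:: ]) (fun _ : unit => all (fun b => gif (b \notin [:: a]) (fun _ : unit => all (fun d => gif (d \notin [:: b; a]) (fun _ : unit => all (fun e => gif (e \notin [:: d; b; a]) (fun _ : unit => all (fun g => gif (g \notin [:: e; d; b; a]) (fun _ : unit => all (fun h => gif (h \notin [:: g; e; d; b; a]) (fun _ : unit => det3b (fun k l => prism (nth a [:: a; b; d] k) (nth a [:: e; g; h] l)))) vU)) vU)) vU)) vU)) vU)) vU.

Lemma check1_ok : check1. Proof. vm_compute. reflexivity. Qed.

Notation q0 := (@Ordinal 7 0 isT).
Notation q1 := (@Ordinal 7 1 isT).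
Notation q2 := (@Ordinal 7 2 isT).
Notation q3 := (@Ordinal 7 3 isT).
Notation q4 := (@Ordinal 7 4 isT).
Notation q5 := (@Ordinal 7 5 isT).
Notation q6 := (@Ordinal 7 6 isT).

Definition E7 : seq 'I_7 := [:: q0; q1; q2; q3; q4; q5; q6].
Lemma mem_E7 (x : 'I_7) : x \in E7.
Proof. by case: x => [[|[|[|[|[|[|[|k]]]]]]] Hk]. Qed.

Definition wlist : seq (seq 'I_7 * seq 'I_7) := [:: ([:: q0; q1; q3], [:: q2; q4; q6]); ([:: q0; q1; q4], [:: q2; q3; q6]); ([:: q0; q1; q5], [:: q2; q4; q6]); ([:: q0; q2; q3], [:: q1; q4; q6]); ([:: q0; q2; q4], [:: q1; q3; q5]); ([:: q0; q2; q5], [:: q1; q3; q4]); ([:: q0; q2; q6], [:: q1; q3; q5]); ([:: q0; q3; q4], [:: q1; q2; q5]); ([:: q0; q3; q5], [:: q1; q2; q4]); ([:: q0; q3; q6], [:: q1; q2; q5]); ([:: q0; q4; q5], [:: q1; q3; q6]); ([:: q0; q4; q6], [:: q1; q3; q5]); ([:: q1; q2; q4], [:: q0; q3; q5]); ([:: q1; q2; q5], [:: q0; q3; q4]); ([:: q1; q2; q6], [:: q0; q3; q5]); ([:: q1; q3; q4], [:: q0; q2; q5]); ([:: q1; q3; q5], [:: q0; q2; q4]); ([:: q1; q3; q6], [:: q0; q2; q4]); ([:: q1; q4; q5], [:: q0; q3; q6]); ([:: q1; q4; q6], [:: q0; q2; q3]); ([:: q1; q5; q6], [:: q0; q2; q4]);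 ([:: q2; q3; q5], [:: q1; q4; q6]); ([:: q2; q3; q6], [:: q0; q1; q4]); ([:: q2; q4; q5], [:: q1; q3; q6]); ([:: q2; q4; q6], [:: q0; q1; q3]); ([:: q2; q5; q6], [:: q0; q1; q4]); ([:: q3; q4; q6], [:: q0; q2; q5]); ([:: q3; q5; q6], [:: q0; q2; q4]); ([:: q0; q2; q4], [:: q3; q5; q6]); ([:: q0; q2; q5], [:: q3; q4; q6]); ([:: q0; q1; q4], [:: q2; q5; q6]); ([:: q0; q1; q3], [:: q2; q4; q6]); ([:: q1; q3; q6], [:: q2; q4; q5]); ([:: q0; q1; q4], [:: q2; q3; q6]); ([:: q1; q4; q6], [:: q2; q3; q5]); ([:: q0; q2; q4], [:: q1; q5; q6]); ([:: q0; q2; q3], [:: q1; q4; q6]); ([:: q0; q3; q6], [:: q1; q4; q5]); ([:: q0; q2; q4], [:: q1; q3; q6]); ([:: q0; q2; q4], [:: q1; q3; q5]); ([:: q0; q2; q5], [:: q1; q3; q4]); ([:: q0; q3; q5], [:: q1; q2; q6]); ([:: q0; q3; q4], [:: q1; q2; q5]); ([:: q0; q3; q5], [:: q1; q2; q4]); ([:: q1; q3; q5], [:: q0; q4; q6]); ([:: q1; q3; q6], [:: q0; q4; q5]); ([:: q1; q2; q5], [:: q0; q3; q6]); ([:: q1; q2; q4], [:: q0; q3; q5]); ([:: q1; q2; q5], [:: q0; q3; q4]); ([:: q1; q3; q5], [:: q0; q2; q6]); ([:: q1; q3; q4], [:: q0; q2; q5]); ([:: q1; q3; q5], [:: q0;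 q2; q4]); ([:: q1; q4; q6], [:: q0; q2; q3]); ([:: q2; q4; q6], [:: q0; q1; q5]); ([:: q2; q3; q6], [:: q0; q1; q4]); ([:: q2; q4; q6], [:: q0; q1; q3])].

Definition wok (q : 'I_7 -> 'I_7) (w : seq 'I_7 * seq 'I_7) : bool :=
  [&& size w.1 == 3%N, size w.2 == 3%N,
   all (fun a => all (fun b => (b != a) && (b != q a)) w.2) w.1 &
   det3b (fun k l => cycle_graph 7 (nth q0 w.1 k) (nth q0 w.2 l))].

Definition good (q : 'I_7 -> 'I_7) := has (wok q) wlist.
Definition qf (l : seq 'I_7) : 'I_7 -> 'I_7 := fun i => nth q0 l i.

Definition check2 : bool :=
  all (fun a0 => gif (true) (fun _ : unit => all (fun a1 => gif (((a0 == q1) == (a1 == q0))) (fun _ : unit => all (fun a2 => gif (((a0 == q2) == (a2 == q0)) && ((a1 == q2) == (a2 == q1))) (fun _ : unit => all (fun a3 => gif (((a0 == q3) == (a3 == q0)) && ((a1 == q3) == (a3 == q1)) && ((a2 == q3) == (a3 == q2))) (fun _ : unit => all (fun a4 => gif (((a0 == q4) == (a4 == q0)) && ((a1 == q4) == (a4 == q1)) && ((a2 == q4) == (a4 == q2)) && ((a3 == q4) == (a4 == q3))) (fun _ : unit => all (fun a5 => gif (((a0 == q5) == (a5 == q0)) && ((a1 == q5) == (a5 == q1)) && ((a2 == q5) == (a5 == q2)) && ((a3 == q5) == (a5 == q3)) && ((a4 == q5) == (a5 == q4))) (fun _ : unit => all (fun a6 => gif (((a0 == q6) == (a6 == q0))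 && ((a1 == q6) == (a6 == q1)) && ((a2 == q6) == (a6 == q2)) && ((a3 == q6) == (a6 == q3)) && ((a4 == q6) == (a6 == q4)) && ((a5 == q6) == (a6 == q5))) (fun _ : unit => good (qf [:: a0; a1; a2; a3; a4; a5; a6]))) E7)) E7)) E7)) E7)) E7)) E7)) E7.

Lemma check2_ok : check2. Proof. vm_compute. reflexivity. Qed.

Lemma key (T : finType) (g : rel T) (s : seq T) (X : {set T}) (r c : nat -> T)
  (b : nat -> nat -> bool) :
  symmetric g -> irreflexive g ->
  (forall k, (k < 3)%N -> r k \in X) -> (forall l, (l < 3)%N -> c l \notin X) ->
  (\rank (cutmx g X) <= 2)%N ->
  (forall k l, (k < 3)%N -> (l < 3)%N -> b k l = @local_comps T g s (r k) (c l)) ->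
  det3b b = false.
Proof.
move=> se ie rX cX rk hb; apply/negP => db.
pose B := mxsub (fun k : 'I_3 => enum_rank (r k)) (fun l : 'I_3 => enum_rank (c l))
  (cutmx (@local_comps T g s) X).
have EB : B = \matrix_(k, l) b2F (b k l).
  apply/matrixP => k l; rewrite !mxE !enum_rankK /cutb rX // cX // hb //.
have r3 : \rank B = 3%N.
  rewrite EB; apply: mxrank_unit; rewrite unitmxE det3_b2F db unitfE.
  by apply/eqP.
have := rank_mxsub (fun k : 'I_3 => enum_rank (r k)) (fun l : 'I_3 => enum_rank (c l))
  (cutmx (@local_comps T g s) X).
rewrite -/B r3 => h3.
have := leq_trans h3 (leq_trans (rank_lcs s X se ie) rk).
by [].
Qed.

Lemma cycle_sym n : symmetric (cycle_graph n).
Proof. by move=> x y; rewrite /cycle_graph eq_sym orbC. Qed.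
Lemma cycle_irr n : irreflexive (cycle_graph n).
Proof. by move=> x; rewrite /cycle_graph eqxx. Qed.
Lemma mc_sym n : symmetric (matched_cliques n).
Proof. by move=> x y; rewrite /matched_cliques (eq_sym x.1) (eq_sym x.2). Qed.
Lemma mc_irr n : irreflexive (matched_cliques n).
Proof. by move=> x; rewrite /matched_cliques !eqxx. Qed.

Lemma cycle_rank n c (hc : (0 < c)%N) (hcn : (c <= n)%N) :
  (\rank (cutmx (cycle_graph n) [set i : 'I_n | (i < c)%N]) <= 2)%N.
Proof.
have h0 : (0 < n)%N by lia.
have h1 : (c.-1 < n)%N by lia.
apply: (@cut_rank2 _ _ _ (Ordinal h0) (Ordinal h1)) => x.
case xX: (x \in [set i : 'I_n | (i < c)%N]); last first.
  by apply: Or31 => y; rewrite /cutb xX.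
case: (eqVneq (val x) 0) => [x0|x0].
  by apply: Or32 => y; have -> : x = Ordinal h0 by apply: val_inj.
case: (eqVneq (val x) c.-1) => [x1|x1].
  by apply: Or33 => y; have -> : x = Ordinal h1 by apply: val_inj.
apply: Or31 => y; rewrite /cutb xX /=; apply/negP => /andP[].
rewrite !inE -leqNgt => yc /andP[_].
move: xX; rewrite inE => xc.
have x1' : (nat_of_ord x <> c.-1) by apply/eqP.
have x0' : (nat_of_ord x <> 0)%N by apply/eqP.
have xn : (x.+1 < n)%N by lia.
rewrite (modn_small xn).
have yn : (y < n)%N by [].
case/orP => /eqP E.
  have E' : nat_of_ord y = x.+1 := E; lia.
have : (y.+1 < n)%N \/ y.+1 = n by lia.
have E' : nat_of_ord x = (y.+1 %% n)%N := E.
case=> [yn'|yn']; first by rewrite (modn_small yn') in E'; lia.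
by rewrite yn' modnn in E'.
Qed.

Lemma matched_rank n (S : pred 'I_n) s0 (hs0 : S s0) :
  (\rank (cutmx (matched_cliques n) [set x | S x.2]) <= 2)%N.
Proof.
apply: (@cut_rank2 _ _ _ (false, s0) (true, s0)) => x.
case Sx: (S x.2); last first.
  by apply: Or31 => y; rewrite /cutb inE Sx.
have key : forall y x' : bool * 'I_n, S x'.2 -> ~~ S y.2 ->
    matched_cliques n x' y = (x'.1 == y.1).
  move=> y x' Sx' Sy; have ne : x'.2 != y.2.
    by apply/eqP => E; rewrite -E Sx' in Sy.
  by rewrite /matched_cliques ne (negbTE ne) andbT andbF orbF.
case: x Sx => [[] xi] Sx /=.
- apply: Or33 => y; rewrite /cutb !inE Sx hs0 /=.
  case Sy: (S y.2) => //=; rewrite !key //= ?Sy //.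
- apply: Or32 => y; rewrite /cutb !inE Sx hs0 /=.
  case Sy: (S y.2) => //=; rewrite !key //= ?Sy //.
Qed.

Lemma check1P (a b d e g h : bool * 'I_3) : uniq [:: a; b; d; e; g; h] ->
  det3b (fun k l => prism (nth a [:: a; b; d] k) (nth a [:: e; g; h] l)).
Proof.
rewrite -rev_uniq /rev /= => /andP[H1 /andP[H2 /andP[H3 /andP[H4 /andP[H5 _]]]]].
have := check1_ok; rewrite /check1.
move/allP/(_ a (mem_vU a))/gifP/(_ isT).
move/allP/(_ b (mem_vU b))/gifP/(_ H5).
move/allP/(_ d (mem_vU d))/gifP/(_ H4).
move/allP/(_ e (mem_vU e))/gifP/(_ H3).
move/allP/(_ g (mem_vU g))/gifP/(_ H2).
move/allP/(_ h (mem_vU h))/gifP/(_ H1).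
done.
Qed.

Lemma check2P (p : 'I_7 -> 'I_7) : (forall x, p (p x) = x) -> good p.
Proof.
move=> pp.
have G : forall x y, (p x == y) == (p y == x).
  move=> x y; apply/eqP; apply/idP/idP => /eqP <-; by rewrite pp eqxx.
have := check2_ok; rewrite /check2.
move/allP/(_ (p q0) (mem_E7 _))/gifP/(_ isT).
move/allP/(_ (p q1) (mem_E7 _))/gifP => H1.
have {H1} := H1 ltac:(by rewrite !G).
move/allP/(_ (p q2) (mem_E7 _))/gifP => H2.
have {H2} := H2 ltac:(by rewrite !G).
move/allP/(_ (p q3) (mem_E7 _))/gifP => H3.
have {H3} := H3 ltac:(by rewrite !G).
move/allP/(_ (p q4) (mem_E7 _))/gifP => H4.
have {H4} := H4 ltac:(by rewrite !G).
move/allP/(_ (p q5) (mem_E7 _))/gifP => H5.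
have {H5} := H5 ltac:(by rewrite !G).
move/allP/(_ (p q6) (mem_E7 _))/gifP => H6.
have {H6} := H6 ltac:(by rewrite !G).
have -> : qf [:: p q0; p q1; p q2; p q3; p q4; p q5; p q6] = p.
  apply: functional_extensionality => x.
  case: x => [[|[|[|[|[|[|[|k]]]]]]] Hk] //=; try (by congr p; apply: val_inj).
exact: id.
Qed.

Lemma ivt (k : nat -> nat) m N : k 0%N = 0%N -> (forall c, (k c.+1 <= (k c).+1)%N) ->
  (m <= k N)%N -> exists c, (c <= N)%N /\ k c = m.
Proof.
move=> k0 kS; elim: N => [|N IH] hm.
  by exists 0%N; split => //; move: hm; rewrite k0 leqn0 => /eqP ->.
case: (leqP m (k N)) => h.
  by case: (IH h) => c [cN kc]; exists c; split => //; apply: leqW.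
exists N.+1; split => //; have := kS N; lia.
Qed.

Lemma part1 n (hn : (0 < n)%N) : ~ @vertex_minor _ _ prism (cycle_graph n).
Proof.
case=> s [f [finj hf]].
pose k c := #|[set u | (f u < c)%N]|.
have k0 : k 0%N = 0%N.
  by apply/eqP; rewrite cards_eq0; apply/eqP/setP => u; rewrite !inE.
have kS : forall c, (k c.+1 <= (k c).+1)%N.
  move=> c; rewrite /k.
  have sub : [set u | (f u < c.+1)%N] \subset
             [set u | (f u < c)%N] :|: [set u | val (f u) == c].
    by apply/subsetP => u; rewrite !inE ltnS leq_eqVlt orbC.
  apply: leq_trans (subset_leq_card sub) _.
  rewrite cardsU; apply: leq_trans (leq_subr _ _) _.
  rewrite -[X in (_ <= X)%N]addn1 leq_add2l.
  case: (set_0Vmem [set u | val (f u) == c]) => [->|[u0 Hu0]]; first by rewrite cards0.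
  rewrite -[X in (_ <= X)%N](cards1 u0); apply: subset_leq_card; apply/subsetP => u.
  rewrite !inE => /eqP Hu; move: Hu0; rewrite inE => /eqP Hu0.
  by apply/eqP; apply: finj; apply: val_inj; rewrite Hu Hu0.
have kn : k n = 6%N.
  rewrite /k; have -> : [set u | (f u < n)%N] = setT by apply/setP => u; rewrite !inE ltn_ord.
  by rewrite cardsT card_prod card_bool card_ord.
have [c [cn kc]] : exists c, (c <= n)%N /\ k c = 3%N by apply: ivt; rewrite ?kn.
pose Y := [set u | (f u < c)%N].
have cY : #|Y| = 3%N by [].
have cZ : #|~: Y| = 3%N.
  by have := cardsC Y; rewrite cY card_prod card_bool card_ord; lia.
have sY : size (enum Y) = 3%N by rewrite -cardE.
have sZ : size (enum (~: Y)) = 3%N by rewrite -cardE.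
case EY : (enum Y) sY => [|a [|b [|d [|]]]] // _.
case EZ : (enum (~: Y)) sZ => [|e [|g [|h [|]]]] // _.
have U : uniq (enum Y ++ enum (~: Y)).
  rewrite cat_uniq !enum_uniq /= andbT; apply/hasPn => z.
  by rewrite !mem_enum inE.
rewrite EY EZ in U.
have D := check1P U.
have inY : forall x, x \in [:: a; b; d] -> (f x < c)%N.
  by move=> x; rewrite -EY mem_enum inE.
have notY : forall x, x \in [:: e; g; h] -> ~~ (f x < c)%N.
  by move=> x; rewrite -EZ mem_enum !inE.
have c0 : (0 < c)%N by have := inY a; rewrite inE eqxx => /(_ isT); lia.
have := @key _ (cycle_graph n) s [set i : 'I_n | (i < c)%N]
  (fun k => f (nth a [:: a; b; d] k)) (fun l => f (nth a [:: e; g; h] l))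
  (fun k l => prism (nth a [:: a; b; d] k) (nth a [:: e; g; h] l))
  (@cycle_sym n) (@cycle_irr n).
rewrite D => K; suff: true = false by []; apply: K.
- by move=> k' hk; rewrite inE; apply: inY; apply: mem_nth.
- by move=> l' hl; rewrite inE; apply: notY; apply: mem_nth.
- exact: cycle_rank.
- by move=> k' l' _ _; apply: hf.
Qed.

Lemma part2 n : ~ @vertex_minor _ _ (cycle_graph 7) (matched_cliques n).
Proof.
case=> s [f [finj hf]].
have fiber : forall a b c : 'I_7, (f a).2 = (f b).2 -> (f c).2 = (f b).2 ->
    a != b -> c != b -> a = c.
  move=> a b c Ea Ec nab ncb.
  have nab' : f a != f b by apply: contra nab => /eqP/finj ->.
  have ncb' : f c != f b by apply: contra ncb => /eqP/finj ->.
  apply: (finj).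
  move: Ea Ec nab' ncb'; case: (f a) => [a1 a2]; case: (f b) => [b1 b2];
    case: (f c) => [c1 c2] /= -> ->.
  by case: a1; case: b1; case: c1; rewrite ?eqxx.
pose p := fun u => odflt u [pick w | (w != u) && ((f w).2 == (f u).2)].
have pS : forall u, (p u = u /\ forall w, w != u -> (f w).2 != (f u).2) \/
                    (p u != u /\ (f (p u)).2 = (f u).2).
  move=> u; rewrite /p; case: pickP => [w /andP[nwu /eqP Ew]|none] /=.
    by right.
  left; split => // w nwu; move: (none w); rewrite nwu /=.
  by move/negbT.
have P1 : forall u w, (f w).2 = (f u).2 -> w = u \/ w = p u.
  move=> u w E; case: (eqVneq w u) => [->|nwu]; first by left.
  right; case: (pS u) => [[_ Hno]|[nu Eu]].
    by move: (Hno w nwu); rewrite E eqxx.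
  by apply: (fiber w u (p u)).
have P2 : forall u, p (p u) = u.
  move=> u; case: (pS u) => [[Hu _]|[nu Eu]]; first by rewrite Hu Hu.
  case: (pS (p u)) => [[_ Hno]|[nw Ew]].
    by move: (Hno u); rewrite eq_sym nu Eu eqxx => /(_ isT).
  apply: (fiber (p (p u)) (p u) u Ew (esym Eu) nw).
  by rewrite eq_sym.
have := check2P P2; case/hasP => [[rs cs] _ /and4P[/eqP s1 /eqP s2 sep D]].
rewrite /= in s1 s2 sep D.
pose S := fun i : 'I_n => has (fun a => (f a).2 == i) rs.
have mrs : forall k, (k < 3)%N -> nth q0 rs k \in rs by move=> k hk; rewrite mem_nth ?s1.
have mcs : forall k, (k < 3)%N -> nth q0 cs k \in cs by move=> k hk; rewrite mem_nth ?s2.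
have := @key _ (matched_cliques n) s [set x | S x.2]
  (fun k => f (nth q0 rs k)) (fun l => f (nth q0 cs l))
  (fun k l => cycle_graph 7 (nth q0 rs k) (nth q0 cs l))
  (@mc_sym n) (@mc_irr n).
rewrite D => K; suff: true = false by []; apply: K.
- move=> k' hk; rewrite inE; apply/hasP; exists (nth q0 rs k') => //; exact: mrs.
- move=> l' hl; rewrite inE; apply/hasPn => a ars; apply/negP => /eqP E.
  have := allP sep a ars => /allP /(_ _ (mcs _ hl)) /andP[n1 n2].
  case: (P1 a (nth q0 cs l') (esym E)) => E'; by rewrite E' eqxx in n1 n2.
- apply: (matched_rank (s0 := (f (nth q0 rs 0)).2)).
  by apply/hasP; exists (nth q0 rs 0) => //; exact: mrs.
- by move=> k' l' _ _; apply: hf.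
Qed.

Local Close Scope ring_scope.
Unset Implicit Arguments.

Theorem proposition8p1 (n : nat) (hn : 0 < n) :
  ~ @vertex_minor _ _ prism (cycle_graph n) /\
  ~ @vertex_minor _ _ (cycle_graph 7) (matched_cliques n).
Proof. by split; [exact: part1 | exact: part2]. Qed.
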